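(* For every graph $\mathcal{G}$ there exists a scattered, locally quasi-compact topological space $X$, which is neither $\mathbf{T}_1$ nor zero-dimensional, such that $\mathrm{Homeo}(X)$ is isomorphic as a topological group to $\mathrm{Aut}(\mathcal{G})$.
   Context: A graph is a pair $(V,E)$ with $E$ a nonempty set of 2-element subsets of $V$ (simple, non-oriented). $\mathrm{Aut}(\mathcal{G})$ is the subgroup of $\mathrm{Sym}(V)$ preserving $E$, with the topology of pointwise convergence on the discrete set $V$. A space is scattered if every nonempty subset has a point isolated in that subset; locally quasi-compact if each point has a quasi-compact neighbourhood (no separation assumed); $\mathbf{T}_1$ if singletons are closed; zero-dimensional if it has a basis of clopen sets. For scattered $X$, $\mathrm{Homeo}(X)$ carries the topology of pointwise convergence on $X$. *)

(* Defs.v *)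
From mathcomp Require Import all_boot all_order all_algebra.
From mathcomp Require Import all_classical all_reals all_analysis.
Set Implicit Arguments. Unset Strict Implicit. Unset Printing Implicit Defensive.
Local Open Scope classical_set_scope.

(* A graph (V,E): E a nonempty set of 2-element subsets of V, encoded as a
   symmetric irreflexive adjacency relation with at least one edge. *)
Definition is_graph (V : Type) (adj : V -> V -> Prop) : Prop :=
  (forall x y, adj x y -> adj y x) /\ (forall x, ~ adj x x) /\
  (exists x y, adj x y).

Definition graph_aut (V : Type) (adj : V -> V -> Prop) : set (V -> V) :=
  [set f | bijective f /\ forall x y, adj x y <-> adj (f x) (f y)].

(* Open subsets of Aut(G) for the topology of pointwise convergence on the
   discrete set V (basic nbhds of g: {h | h = g on a finite F}). *)
Definition aut_open (V : Type) (adj : V -> V -> Prop) (S : set (V -> V)) : Prop :=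
  S `<=` graph_aut adj /\
  forall g, S g -> exists F : set V, finite_set F /\
    forall h, graph_aut adj h -> (forall v, F v -> h v = g v) -> S h.

Definition homeo (X : topologicalType) : set (X -> X) :=
  [set f | continuous f /\ exists g : X -> X,
     continuous g /\ cancel f g /\ cancel g f].
Arguments homeo : clear implicits.

(* Open subsets of Homeo(X) for the topology of pointwise convergence on X:
   basic nbhds of h are {k | k x_i \in U_i, i finite} with U_i open, h x_i \in U_i. *)
Definition homeo_open (X : topologicalType) (S : set (X -> X)) : Prop :=
  S `<=` homeo X /\
  forall h, S h -> exists I : set X, finite_set I /\
    exists U : X -> set X, (forall x, I x -> open (U x) /\ U x (h x)) /\
      forall k, homeo X k -> (forall x, I x -> U x (k x)) -> S k.

Definition scattered (X : topologicalType) : Prop :=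
  forall A : set X, A !=set0 ->
    exists x, A x /\ exists U : set X, open U /\ U `&` A = [set x].

(* quasi-compact = mathcomp's (filter) compactness, no separation assumed *)
Definition locally_quasi_compact (X : topologicalType) : Prop :=
  forall x : X, exists N : set X, nbhs x N /\ compact N.

Definition T1_space (X : topologicalType) : Prop :=
  forall x : X, closed [set x].

Definition zero_dim (X : topologicalType) : Prop :=
  forall (U : set X) (x : X), open U -> U x ->
    exists C : set X, clopen C /\ C x /\ C `<=` U.

Definition topgroup_iso (X : topologicalType) (V : Type) (adj : V -> V -> Prop) : Prop :=
  exists phi : (X -> X) -> (V -> V),
    (forall h, homeo X h -> graph_aut adj (phi h)) /\
    (forall h k, homeo X h -> homeo X k -> phi h = phi k -> h = k) /\
    (forall g, graph_aut adj g -> exists h, homeo X h /\ phi h = g) /\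
    (forall h k, homeo X h -> homeo X k -> phi (h \o k) = phi h \o phi k) /\
    (forall S, aut_open adj S -> homeo_open (X:=X) (homeo X `&` phi @^-1` S)) /\
    (forall S, homeo_open S -> aut_open adj (phi @` S)).

(* Main.v *)
Require Import Defs.
From HB Require Import structures.
From mathcomp Require Import all_boot all_order all_algebra.
From mathcomp Require Import all_classical all_reals all_analysis.
Set Implicit Arguments. Unset Strict Implicit. Unset Printing Implicit Defensive.
Local Open Scope classical_set_scope.

Definition is_pt (V : Type) (adj : V -> V -> Prop) (S : set V) : Prop :=
  (exists a, S = [set a]) \/ (exists a b, adj a b /\ S = [set a] `|` [set b]).

Definition PT (V : Type) (adj : V -> V -> Prop) := {S : set V | is_pt adj S}.
Arguments PT : clear implicits.

HB.instance Definition _ V adj := gen_eqMixin (PT V adj).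
HB.instance Definition _ V adj := gen_choiceMixin (PT V adj).

Definition upc V adj (A : set (PT V adj)) : Prop :=
  forall x y : PT V adj, proj1_sig x `<=` proj1_sig y -> A x -> A y.

Lemma upcT V adj : upc (@setT (PT V adj)). Proof. by []. Qed.
Lemma upcI V adj : setI_closed (@upc V adj).
Proof. by move=> A B hA hB x y xy [/(hA _ _ xy) ? /(hB _ _ xy)]. Qed.
Lemma upcU V adj (I : Type) (f : I -> set (PT V adj)) :
  (forall i, upc (f i)) -> upc (\bigcup_i f i).
Proof. by move=> h x y xy [i _ fi]; exists i => //; exact: h xy fi. Qed.

HB.instance Definition _ V adj := isOpenTopological.Build (PT V adj)
  (@upcT V adj) (@upcI V adj) (@upcU V adj).

Lemma openPT V adj (A : set (PT V adj)) : open A <-> upc A.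
Proof. by []. Qed.

Lemma nbhsPT V adj (x : PT V adj) (B : set (PT V adj)) :
  nbhs x B <-> (forall y, proj1_sig x `<=` proj1_sig y -> B y).
Proof.
split.
  by move=> [C [oC Cx CB]] y xy; apply: CB; exact: oC xy Cx.
move=> h; exists [set y | proj1_sig x `<=` proj1_sig y]; split => //.
by move=> a b ab /= xa; apply: subset_trans ab.
Qed.

Lemma set1_inj T (a b : T) : [set a] = [set b] -> a = b.
Proof. by move=> h; have : [set a] a by []; rewrite h. Qed.

Lemma two_sub T (a b c d : T) : a <> b ->
  [set a] `|` [set b] `<=` [set c] `|` [set d] ->
  (a = c /\ b = d) \/ (a = d /\ b = c).
Proof.
move=> ab h.
by have [] := h a (or_introl erefl); have [] := h b (or_intror erefl) => /= hb ha;
  first [by left | by right | by exfalso; apply: ab; rewrite ha hb].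
Qed.

Lemma pt_eq V adj (x y : PT V adj) : proj1_sig x = proj1_sig y -> x = y.
Proof. by case: x => x px; case: y => y py /= e; apply: eq_exist. Qed.

Definition sing V adj (v : V) : PT V adj :=
  exist _ [set v] (or_introl (ex_intro _ v erefl)).

Lemma edge_ex V adj (a b : V) : adj a b ->
  exists p : PT V adj, proj1_sig p = [set a] `|` [set b].
Proof.
move=> h; exists (exist _ ([set a] `|` [set b])
  (or_intror (ex_intro _ a (ex_intro _ b (conj h erefl))))) => //.
Qed.

Lemma sub_sing V adj (x : PT V adj) a : proj1_sig x `<=` [set a] -> x = sing adj a.
Proof.
case: x => S pS /= h; apply: pt_eq => /=; case: pS => [[c e]|[c [d [_ e]]]]; rewrite e in h *.
  by rewrite (h c erefl).
by rewrite (h c (or_introl erefl)) (h d (or_intror erefl)) setUid.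
Qed.

Definition mono V adj (f : PT V adj -> PT V adj) :=
  forall x y, proj1_sig x `<=` proj1_sig y -> proj1_sig (f x) `<=` proj1_sig (f y).

Lemma cont_mono V adj (f : PT V adj -> PT V adj) : continuous f -> mono f.
Proof.
move/continuousP => h x y xy.
have o : open [set z : PT V adj | proj1_sig (f x) `<=` proj1_sig z].
  by apply/openPT => a b ab /= fa; apply: subset_trans ab.
exact: (proj1 (openPT _) (h _ o)) x y xy (@subset_refl _ _).
Qed.

Lemma mono_cont V adj (f : PT V adj -> PT V adj) : mono f -> continuous f.
Proof.
move=> h; apply/continuousP => A /openPT oA; apply/openPT => x y xy /=.
exact: oA (h _ _ xy).
Qed.

Lemma homeo_inv V adj (h : PT V adj -> PT V adj) : homeo _ h ->
  exists g, homeo _ g /\ cancel h g /\ cancel g h.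
Proof.
move=> [hc [g [gc [hg gh]]]]; exists g; split => //; split => //.
by exists h.
Qed.

Lemma img V adj (G : is_graph adj) (h : PT V adj -> PT V adj) : homeo _ h ->
  exists f : V -> V, forall p, proj1_sig (h p) = f @` proj1_sig p.
Proof.
move=> [hc [g [gc [hg gh]]]].
have hm := cont_mono hc; have gm := cont_mono gc.
case: G => Gs [Gi _].
have s1 : forall v, exists w, proj1_sig (h (sing adj v)) = [set w].
  move=> v; case E : (h (sing adj v)) => [S [[w e]|[c [d [cd e]]]]] /=.
    by exists w.
  exfalso.
  have sc : proj1_sig (sing adj c) `<=` proj1_sig (h (sing adj v)).
    by rewrite E /= e => z /= ->; left.
  have gs := gm _ _ sc; rewrite hg in gs; have gcv := sub_sing gs.
  have ce0 : sing adj c = h (sing adj v) by rewrite -gcv gh.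
  rewrite E in ce0; have ce := congr1 (@proj1_sig _ _) ce0; simpl in ce.
  have : S d by rewrite e; right.
  rewrite -ce /= => dc; apply: (Gi c); by have := cd; rewrite dc.
have [f hf] := choice s1.
exists f => p.
case: (proj2_sig p) => [[a e]|[a [b [ab e]]]].
  have -> : p = sing adj a by apply: pt_eq.
  by rewrite hf /= image_set1.
have fab : f a <> f b.
  move=> fe.
  have e1 : h (sing adj a) = h (sing adj b) by apply: pt_eq; rewrite !hf fe.
  have e2 := congr1 g e1; rewrite !hg in e2.
  have e3 := congr1 (@proj1_sig _ _) e2; simpl in e3.
  have abe := set1_inj e3.
  by apply: (Gi a); have := ab; rewrite abe.
have sa : proj1_sig (sing adj a) `<=` proj1_sig p by rewrite e => z /= ->; left.
have sb : proj1_sig (sing adj b) `<=` proj1_sig p by rewrite e => z /= ->; right.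
have := hm _ p sa; have := hm _ p sb.
rewrite !hf /= e image_setU !image_set1.
case: (proj2_sig (h p)) => [[c ->]|[c [d [cd ->]]]] /=.
  move=> H1 H2; exfalso; apply: fab; by rewrite (H1 _ erefl) (H2 _ erefl).
move=> hb ha.
have sub : [set f a] `|` [set f b] `<=` [set c] `|` [set d].
  by move=> z [] /= ->; [apply: ha | apply: hb].
by case: (two_sub fab sub) => [[-> ->]|[-> ->]] //; rewrite setUC.
Qed.

Definition phi V adj (h : PT V adj -> PT V adj) : V -> V := fun v =>
  match pselect (exists w, proj1_sig (h (sing adj v)) = [set w]) with
  | left P => projT1 (cid P) | right _ => v end.

Lemma phiE V adj (h : PT V adj -> PT V adj) f :
  (forall p, proj1_sig (h p) = f @` proj1_sig p) -> phi h = f.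
Proof.
move=> hf; apply: funext => v; rewrite /phi.
have hv : proj1_sig (h (sing adj v)) = [set f v] by rewrite hf image_set1.
case: pselect => [P|[]]; last by exists (f v).
case: (cid P) => w /= hw; apply: set1_inj; by rewrite -hw hv.
Qed.

Lemma phi_img V adj (G : is_graph adj) (h : PT V adj -> PT V adj) : homeo _ h ->
  forall p, proj1_sig (h p) = phi h @` proj1_sig p.
Proof. by move=> hh; have [f hf] := img G hh; rewrite (phiE hf). Qed.

Lemma phi_sing V adj (G : is_graph adj) (h : PT V adj -> PT V adj) v : homeo _ h ->
  proj1_sig (h (sing adj v)) = [set phi h v].
Proof. by move=> hh; rewrite (phi_img G hh) image_set1. Qed.

Lemma phi_comp V adj (G : is_graph adj) (h k : PT V adj -> PT V adj) :
  homeo _ h -> homeo _ k -> phi (h \o k) = phi h \o phi k.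
Proof.
move=> hh hk; apply: phiE => p /=.
by rewrite (phi_img G hh) (phi_img G hk) image_comp.
Qed.

Lemma phi_id V adj : phi (@id (PT V adj)) = id.
Proof. by apply: phiE => p; rewrite image_id. Qed.

Lemma phi_inj V adj (G : is_graph adj) (h k : PT V adj -> PT V adj) :
  homeo _ h -> homeo _ k -> phi h = phi k -> h = k.
Proof.
move=> hh hk e; apply: funext => p; apply: pt_eq.
by rewrite (phi_img G hh) (phi_img G hk) e.
Qed.

Lemma phi_fwd V adj (G : is_graph adj) (h : PT V adj -> PT V adj) x y :
  homeo _ h -> adj x y -> adj (phi h x) (phi h y).
Proof.
move=> hh xy; have G' := G; case: G' => Gs [Gi _].
have [g [hg [hgK ghK]]] := homeo_inv hh.
have inv : forall v, phi g (phi h v) = v.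
  move=> v; have := congr1 (fun f => f v) (phi_comp G hg hh).
  by rewrite (_ : g \o h = id) ?phi_id //; apply: funext.
have neq : phi h x <> phi h y.
  by move=> e; apply: (Gi x); have := xy; rewrite -(inv y) -e inv.
have [p ep] := edge_ex xy.
have := phi_img G hh p; rewrite ep image_setU !image_set1.
case: (proj2_sig (h p)) => [[c ->]|[c [d [cd ->]]]] E.
  exfalso; apply: neq.
  have e1 : [set c] (phi h x) by rewrite E; left.
  have e2 : [set c] (phi h y) by rewrite E; right.
  by rewrite e1 e2.
have sub : [set phi h x] `|` [set phi h y] `<=` [set c] `|` [set d] by rewrite E.
by case: (two_sub neq sub) => [[-> ->]|[-> ->]] //; apply: Gs.
Qed.

Lemma phi_aut V adj (G : is_graph adj) (h : PT V adj -> PT V adj) :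
  homeo _ h -> graph_aut adj (phi h).
Proof.
move=> hh; have [g [hg [hgK ghK]]] := homeo_inv hh.
have inv1 : forall v, phi g (phi h v) = v.
  move=> v; have := congr1 (fun f => f v) (phi_comp G hg hh).
  by rewrite (_ : g \o h = id) ?phi_id //; apply: funext.
have inv2 : forall v, phi h (phi g v) = v.
  move=> v; have := congr1 (fun f => f v) (phi_comp G hh hg).
  by rewrite (_ : h \o g = id) ?phi_id //; apply: funext.
split; first by exists (phi g).
move=> x y; split; first exact: phi_fwd.
by move=> /(phi_fwd G hg); rewrite !inv1.
Qed.

Definition liftH V adj (g : V -> V) (p : PT V adj) : PT V adj :=
  match pselect (is_pt adj (g @` proj1_sig p)) with
  | left P => exist _ _ P | right _ => p end.

Lemma liftH_val V adj (g : V -> V) (p : PT V adj) :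
  (forall x y, adj x y -> adj (g x) (g y)) ->
  proj1_sig (liftH g p) = g @` proj1_sig p.
Proof.
move=> hg; rewrite /liftH; case: pselect => [//|[]].
case: (proj2_sig p) => [[a ->]|[a [b [ab ->]]]].
  by left; exists (g a); rewrite image_set1.
by right; exists (g a), (g b); split; [apply: hg | rewrite image_setU !image_set1].
Qed.

Lemma liftH_homeo V adj (G : is_graph adj) (g : V -> V) :
  graph_aut adj g -> homeo _ (liftH (adj:=adj) g) /\ phi (liftH (adj:=adj) g) = g.
Proof.
move=> [[gi K1 K2] hg].
have hg1 : forall x y, adj x y -> adj (g x) (g y) by move=> x y /hg.
have hg2 : forall x y, adj x y -> adj (gi x) (gi y).
  by move=> x y xy; apply/hg; rewrite !K2.
have m1 : mono (liftH (adj:=adj) g).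
  by move=> x y xy; rewrite !liftH_val //; apply: image_subset.
have m2 : mono (liftH (adj:=adj) gi).
  by move=> x y xy; rewrite !liftH_val //; apply: image_subset.
split; last by apply: phiE => p; rewrite liftH_val.
split; first exact: mono_cont.
exists (liftH gi); split; first exact: mono_cont.
split => p; apply: pt_eq; rewrite !liftH_val // image_comp.
  by rewrite (_ : gi \o g = id) ?image_id //; apply: funext.
by rewrite (_ : g \o gi = id) ?image_id //; apply: funext.
Qed.

Lemma edge_max V adj (G : is_graph adj) (e y : PT V adj) a b :
  adj a b -> proj1_sig e = [set a] `|` [set b] ->
  proj1_sig e `<=` proj1_sig y -> y = e.
Proof.
case: G => Gs [Gi _] ab ee sub; apply: pt_eq; rewrite ee; rewrite ee in sub.
have nab : a <> b by move=> e1; apply: (Gi a); have := ab; rewrite -e1.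
case: (proj2_sig y) => [[c E]|[c [d [cd E]]]]; rewrite E in sub *.
  exfalso; apply: nab.
  by rewrite (sub a (or_introl erefl)) (sub b (or_intror erefl)).
by case: (two_sub nab sub) => [[-> ->]|[-> ->]] //; rewrite setUC.
Qed.

Lemma up_open V adj (x : PT V adj) : open [set y : PT V adj | proj1_sig x `<=` proj1_sig y].
Proof. by apply/openPT => a b ab /= xa; apply: subset_trans ab. Qed.

Lemma not_closed_e V adj (G : is_graph adj) (e : PT V adj) a b :
  adj a b -> proj1_sig e = [set a] `|` [set b] -> ~ closed [set e].
Proof.
move=> ab ee /closed_openC /openPT op.
have G' := G; case: G' => Gs [Gi _].
have ne : (~` [set e]) (sing adj a).
  move=> /= sa; have := congr1 (@proj1_sig _ _) sa; rewrite ee /= => E.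
  have : [set a] b by rewrite E; right.
  by move=> /= ba; apply: (Gi a); have := ab; rewrite ba.
have := op _ e _ ne; apply => //.
by rewrite ee => z /= ->; left.
Qed.

Lemma scatteredPT V adj (G : is_graph adj) : scattered (PT V adj).
Proof.
have G' := G; case: G' => Gs [Gi _].
move=> A [x0 Ax0].
case: (pselect (exists e, A e /\ exists a b, adj a b /\
   proj1_sig e = [set a] `|` [set b])) => [[e [Ae [a [b [ab ee]]]]]|ne].
  exists e; split => //; exists [set y | proj1_sig e `<=` proj1_sig y].
  split; first exact: up_open.
  apply/seteqP; split => y /=; last by move=> ->; split.
  move=> [ey _]; exact: (edge_max G ab ee ey).
exists x0; split => //; exists [set y | proj1_sig x0 `<=` proj1_sig y].
split; first exact: up_open.
apply/seteqP; split => y /=; last by move=> ->; split.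
move=> [xy Ay].
case: (proj2_sig y) => [[c E]|[c [d [cd E]]]].
  rewrite E in xy; rewrite (sub_sing xy); apply: pt_eq; by rewrite E.
by exfalso; apply: ne; exists y; split => //; exists c, d.
Qed.

Lemma lqcPT V adj : locally_quasi_compact (PT V adj).
Proof.
move=> x; exists [set y | proj1_sig x `<=` proj1_sig y].
split; first by apply/nbhsPT.
move=> F FF FN; exists x; split => //=.
move=> A B FA /nbhsPT nB.
have [z [Az Nz]] := filter_ex (filterI FA FN).
by exists z; split => //; apply: nB.
Qed.

Lemma isoPT V adj (G : is_graph adj) : topgroup_iso (PT V adj) adj.
Proof.
exists (@phi V adj); split; first by move=> h; exact: phi_aut.
split; first by move=> h k; exact: phi_inj.
split; first by move=> g ag; have [? ?] := liftH_homeo G ag; exists (liftH g).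
split; first by move=> h k; exact: phi_comp.
split.
  move=> S [_ hS]; split; first by move=> h [].
  move=> h [hh Sh]; have [F [fF HF]] := hS _ Sh.
  exists (sing adj @` F); split; first exact: finite_image.
  exists (fun x => [set y : PT V adj | proj1_sig (h x) `<=` proj1_sig y]); split.
    by move=> x _; split; [exact: up_open | ].
  move=> k hk kI; split => //=; apply: HF; first exact: phi_aut.
  move=> v Fv; have := kI (sing adj v) (ex_intro2 _ _ v Fv erefl).
  rewrite /= (phi_sing G _ hk) (phi_sing G _ hh) => sub.
  by rewrite (sub _ erefl).
move=> S [S1 hS]; split.
  by move=> g [h Sh <-]; apply: phi_aut => //; exact: S1.
move=> g [h Sh <-]; have hh := S1 _ Sh.
have [I [fI [U [hU hk]]]] := hS _ Sh.
exists (\bigcup_(x in I) proj1_sig x); split.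
  apply: bigcup_finite => // x _.
  case: (proj2_sig x) => [[a ->]|[a [b [_ ->]]]]; first exact: finite_set1.
  by rewrite finite_setU; split; exact: finite_set1.
move=> g' ag' agree; have [Hh Hphi] := liftH_homeo G ag'.
exists (liftH g') => //; apply: hk => // x Ix.
have -> : liftH g' x = h x.
  apply: pt_eq; rewrite liftH_val; last by move=> ? ? /(proj2 ag').
  rewrite (phi_img G hh); apply: eq_imagel => v xv.
  by apply: agree; exists x.
exact: (proj2 (hU x Ix)).
Qed.

Theorem proposition24 (V : Type) (adj : V -> V -> Prop) :
  is_graph adj ->
  exists X : topologicalType,
    scattered X /\ locally_quasi_compact X /\
    ~ T1_space X /\ ~ zero_dim X /\
    topgroup_iso X adj.
Proof.
move=> G; exists (PT V adj).
have G' := G; case: G' => Gs [Gi [a [b ab]]].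
have [e ee] := edge_ex ab.
split; first exact: scatteredPT.
split; first exact: lqcPT.
split; first by move=> T1; exact: (not_closed_e G ab ee (T1 e)).
split; last exact: isoPT.
move=> zd.
have oe : open [set e].
  apply/openPT => x y xy /= xe; rewrite xe in xy; exact: (edge_max G ab ee xy).
have [C [[_ cC] [Ce sC]]] := zd _ e oe erefl.
have CE : C = [set e] by apply/seteqP; split => // y /= ->.
by apply: (not_closed_e G ab ee); rewrite -CE.
Qed.
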